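(* Let $\alpha\ge1$, let $m_0:[0,\infty)\to[0,\infty)$ be bounded, Lipschitz and non-decreasing with $m_0(0)=0$, let $h_\rho,h_t>0$ satisfy (CFL), let $M_j^n$ be given by the scheme (M), and let $U_j^n=\frac{M_j^n-M_{j-1}^n}{h_\rho}$ for $j\ge1$. Then $U_j^n\ge0$ for all $n,j$ and $$\sup_{j}U_j^{n+1}\le\sup_jU_j^n\qquad\text{for all }n\ge0.$$
   Context: (CFL): $\frac{h_t}{h_\rho}\le\frac{1}{2\alpha\|(m_0)_\rho\|_\infty^{\alpha-1}\|m_0\|_\infty}$. Scheme (M): with $t_n=nh_t$, $\rho_j=jh_\rho$, $H(s)=\big(\min\{s_+,\|(m_0)_\rho\|_\infty\}\big)^\alpha$, set $M_j^0=m_0(\rho_j)$ ($j\ge0$), $M_0^n=0$ ($n>0$), and $M_j^{n+1}=M_j^n\big/\big(1+h_tH\big(\frac{M_j^n-M_{j-1}^n}{h_\rho}\big)\big)$ for $j\ge1$, $n\ge0$. *)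

(* Defs.v *)
From HB Require Import structures.
From mathcomp Require Import all_boot all_order all_algebra.
From mathcomp Require Import all_classical all_reals all_analysis.
Set Implicit Arguments. Unset Strict Implicit. Unset Printing Implicit Defensive.
Import Order.TTheory GRing.Theory Num.Theory.
Local Open Scope classical_set_scope.
Local Open Scope ring_scope.

Definition supnorm {R : realType} (m0 : R -> R) : R :=
  sup [set `|m0 x| | x in [set x : R | 0 <= x]].

(* ||(m0)_rho||_oo : for a Lipschitz function this is its best Lipschitz
   constant on [0,+oo), i.e. the sup of the difference quotients. *)
Definition derivnorm {R : realType} (m0 : R -> R) : R :=
  sup [set q : R | exists x y : R,
         [/\ 0 <= x, x < y & q = `|m0 y - m0 x| / (y - x)]].

Definition Hfun {R : realType} (alpha : R) (m0 : R -> R) (s : R) : R :=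
  (Num.min (Num.max s 0) (derivnorm m0)) `^ alpha.

Fixpoint Mscheme {R : realType} (alpha : R) (m0 : R -> R) (ht hr : R)
    (n j : nat) : R :=
  match n with
  | 0%N => m0 (j%:R * hr)
  | n'.+1 =>
      match j with
      | 0%N => 0
      | j'.+1 =>
          Mscheme alpha m0 ht hr n' j /
          (1 + ht * Hfun alpha m0
                ((Mscheme alpha m0 ht hr n' j - Mscheme alpha m0 ht hr n' j') / hr))
      end
  end.

(* U_j^n = (M_j^n - M_{j-1}^n)/h_rho, meaningful for j >= 1 *)
Definition Uscheme {R : realType} (alpha : R) (m0 : R -> R) (ht hr : R)
    (n j : nat) : R :=
  (Mscheme alpha m0 ht hr n j - Mscheme alpha m0 ht hr n j.-1) / hr.

(* Main.v *)
Require Import Defs.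
From HB Require Import structures.
From mathcomp Require Import all_boot all_order all_algebra.
From mathcomp Require Import all_classical all_reals all_analysis.
From mathcomp Require Import ring lra.
Import Order.TTheory GRing.Theory Num.Theory.
Local Open Scope classical_set_scope.
Local Open Scope ring_scope.

Section Lip.
Import numFieldNormedType.Exports.
Lemma powR_lip (R : realType) (a D x y : R) : 1 <= a -> 0 <= y -> y <= x -> x <= D ->
  x `^ a - y `^ a <= a * D `^ (a - 1) * (x - y).
Proof.
move=> a1 y0 yx xD.
have a0 : 0 < a by apply: lt_le_trans a1.
have a10 : 0 <= a - 1 by rewrite subr_ge0.
have x0 : 0 <= x by apply: le_trans yx.
have pmono : forall c, 0 <= c -> c <= D -> c `^ (a - 1) <= D `^ (a - 1).
  move=> c c0 cD; apply: ge0_ler_powR => //; rewrite nnegrE //; exact: le_trans cD.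
have DP := powR_ge0 D (a - 1).
have [->|yp] := eqVneq y 0.
  rewrite powR0 ?gt_eqF // subr0 subr0 -mulr_powRB1 //.
  have := pmono x x0 xD => h.
  have h2 : x * x `^ (a - 1) <= x * D `^ (a - 1) by rewrite ler_wpM2l.
  have h3 : 0 <= x * D `^ (a - 1) by rewrite mulr_ge0.
  nra.
have ypos : 0 < y by rewrite lt_neqAle eq_sym yp.
have [<-|xy] := eqVneq x y.
  by rewrite !subrr mulr0.
have yltx : y < x by rewrite lt_neqAle eq_sym xy.
have hd : forall c, c \in `]y, x[ -> is_derive c 1 (fun z : R => z `^ a) (a * c `^ (a - 1)).
  move=> c; rewrite in_itv /= => /andP[yc _]; apply: is_derive1_powR.
  exact: lt_trans yc.
have hc : {within `[y, x]%classic, continuous (fun z : R => z `^ a)}.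
  apply: derivable_within_continuous => c; rewrite in_itv /= => /andP[yc _].
  apply: derivable_powR; rewrite in_itv /= andbT; exact: lt_le_trans yc.
have [c cin ->] := MVT yltx hd hc.
move: cin; rewrite in_itv /= => /andP[yc cx].
have := pmono c (ltW (lt_trans ypos yc)) (ltW (lt_le_trans cx xD)) => h.
apply: ler_wpM2r; first by rewrite subr_ge0 ltW.
by rewrite ler_wpM2l // ltW.
Qed.
End Lip.

Lemma step (R : realFieldType) (a b u v p q hr ht S c : R) :
 0 < hr -> 0 < ht -> 0 <= a -> a <= S -> 0 <= u -> 0 <= v -> b = a + hr * u ->
 0 <= p -> 0 <= q -> 0 <= c ->
 (v <= u -> 0 <= q - p /\ q - p <= c * (u - v)) ->
 (u <= v -> 0 <= p - q /\ p - q <= c * (v - u)) -> 2 * c * S * ht <= hr ->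
 0 <= (b / (1 + ht * q) - a / (1 + ht * p)) / hr /\
 (b / (1 + ht * q) - a / (1 + ht * p)) / hr <= Num.max u v.
Proof.
move=> hr0 ht0 a0 aS u0 v0 -> p0 q0 c0 H1 H2 cfl.
have X1 : 1 <= 1 + ht * q by rewrite lerDl mulr_ge0 // ltW.
have Y1 : 1 <= 1 + ht * p by rewrite lerDl mulr_ge0 // ltW.
set X := 1 + ht * q in X1 *; set Y := 1 + ht * p in Y1 *.
have X0 : X != 0 by rewrite gt_eqF // (lt_le_trans ltr01).
have Y0 : Y != 0 by rewrite gt_eqF // (lt_le_trans ltr01).
have hr0' : hr != 0 by rewrite gt_eqF.
have -> : ((a + hr * u) / X - a / Y) / hr =
   (hr * u * Y + a * ht * (p - q)) / (X * Y * hr).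
  rewrite /X /Y in X0 Y0 *; field; rewrite X0 Y0 hr0' //.
have XYh : 0 < X * Y * hr by rewrite !mulr_gt0 // (lt_le_trans ltr01).
suff [g1 g2] : 0 <= hr * u * Y + a * ht * (p - q) /\
   hr * u * Y + a * ht * (p - q) <= Num.max u v * (X * Y * hr).
  by split; [rewrite divr_ge0 // ltW | rewrite ler_pdivrMr].
have aS' : 0 <= S by apply: le_trans aS.
have [vu|uv] := leP v u.
  have [d0 dc] := H1 vu.
  have h1 : a * (q - p) <= S * (c * (u - v)) by apply: ler_pM.
  have h2 : 0 <= a * (q - p) by apply: mulr_ge0.
  have h3 : hr * u <= hr * u * Y by rewrite ler_peMr // mulr_ge0 // ltW.
  have h4 : hr * u * Y <= hr * u * Y * X.
    by rewrite ler_peMr // mulr_ge0 // ?(le_trans ler01 Y1) // mulr_ge0 // ltW.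
  have h5 : ht * (a * (q - p)) <= ht * (S * (c * (u - v))) by rewrite ler_wpM2l // ltW.
  have h6 : 2 * c * S * ht * (u - v) <= hr * (u - v) by rewrite ler_wpM2r // subr_ge0.
  split; nra.
have [d0 dc] := H2 (ltW uv).

have h1 : a * (p - q) <= S * (c * (v - u)) by apply: ler_pM.
have h2 : 0 <= a * (p - q) by apply: mulr_ge0.
have h3 : hr * u <= hr * u * Y by rewrite ler_peMr // mulr_ge0 // ltW.
have h5 : ht * (a * (p - q)) <= ht * (S * (c * (v - u))) by rewrite ler_wpM2l // ltW.
have h6 : 2 * c * S * ht * (v - u) <= hr * (v - u) by rewrite ler_wpM2r // subr_ge0 ltW.
have h7 : hr * v * Y <= hr * v * Y * X.
  by rewrite ler_peMr // mulr_ge0 // ?(le_trans ler01 Y1) // mulr_ge0 // ltW.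
have h8 : hr * (v - u) <= hr * (v - u) * Y.
  by rewrite ler_peMr // mulr_ge0 // ?ltW // subr_gt0.
split; nra.
Qed.

Lemma Hfun_props {R : realType} {alpha : R} {m0 : R -> R} {u v : R} :
  1 <= alpha -> 0 <= derivnorm m0 -> 0 <= v -> v <= u ->
  0 <= Hfun alpha m0 u - Hfun alpha m0 v /\
  Hfun alpha m0 u - Hfun alpha m0 v <=
    alpha * derivnorm m0 `^ (alpha - 1) * (u - v).
Proof.
move=> a1 D0 v0 vu.
have u0 : 0 <= u by apply: le_trans vu.
rewrite /Hfun (max_l u0) (max_l v0).
set D := derivnorm m0.
have ymin0 : 0 <= Num.min v D by rewrite le_min v0 D0.
have yx : Num.min v D <= Num.min u D.
  by rewrite le_min !ge_min vu lexx orbT.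
have xD : Num.min u D <= D by rewrite ge_min lexx orbT.
have c0 : 0 <= alpha * D `^ (alpha - 1).
  by rewrite mulr_ge0 ?powR_ge0 // (le_trans ler01).
split.
  rewrite subr_ge0; apply: ge0_ler_powR.
  - exact: le_trans ler01 a1.
  - by rewrite nnegrE.
  - by rewrite nnegrE (le_trans ymin0).
  - exact: yx.
apply: (le_trans (@powR_lip R alpha D _ _ a1 ymin0 yx xD)).
apply: ler_wpM2l => //.
have hmin : Num.min u D - Num.min v D <= u - v.
  case: (leP u D) => uD; case: (leP v D) => vD; lra.
exact: hmin.
Qed.

Lemma div_ge1 {R : realFieldType} {x d : R} : 0 <= x -> 1 <= d -> 0 <= x / d /\ x / d <= x.
Proof.
move=> x0 d1; have d0 : 0 < d by apply: lt_le_trans d1.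
split; first by rewrite divr_ge0 // ltW.
by rewrite ler_pdivrMr // ler_peMr.
Qed.

Theorem mainTheorem11 (R : realType) (alpha : R) (m0 : R -> R) (ht hr : R) :
  1 <= alpha ->
  (exists C : R, forall x, 0 <= x -> `|m0 x| <= C) ->
  (exists L : R, forall x y, 0 <= x -> 0 <= y -> `|m0 x - m0 y| <= L * `|x - y|) ->
  (forall x y, 0 <= x -> x <= y -> m0 x <= m0 y) ->
  (forall x, 0 <= x -> 0 <= m0 x) ->
  m0 0 = 0 ->
  0 < hr -> 0 < ht ->
  (* (CFL), multiplied out: h_t/h_rho <= 1/(2 alpha ||m0'||^(alpha-1) ||m0||) *)
  2 * alpha * (derivnorm m0 `^ (alpha - 1)) * supnorm m0 * ht <= hr ->
  (forall n j : nat, (0 < j)%N -> 0 <= Uscheme alpha m0 ht hr n j) /\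
  (forall n : nat,
     (ereal_sup [set (Uscheme alpha m0 ht hr n.+1 j)%:E | j in [set j : nat | (0 < j)%N]]
      <= ereal_sup [set (Uscheme alpha m0 ht hr n j)%:E | j in [set j : nat | (0 < j)%N]])%E).
Proof.
Proof.
move=> a1 [C HC] [L HL] mono m0ge0 m00 hr0 ht0 cfl.
set D := derivnorm m0.
set S := supnorm m0.
set M := Mscheme alpha m0 ht hr.
set U := Uscheme alpha m0 ht hr.
have hsD : has_sup [set q : R | exists x y : R,
         [/\ 0 <= x, x < y & q = `|m0 y - m0 x| / (y - x)]].
  split.
    exists (`|m0 1 - m0 0| / (1 - 0)); exists 0, 1; split => //.
  exists L => _ [x [y [x0 xy ->]]].
  have y0 : 0 <= y by apply: le_trans x0 (ltW xy).
  rewrite ler_pdivrMr ?subr_gt0 //.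
  have yx0 : 0 < y - x by rewrite subr_gt0.
  by have := HL y x y0 x0; rewrite (gtr0_norm yx0).
have D0 : 0 <= D.
  have hm : `|m0 1 - m0 0| / (1 - 0) <= D.
    rewrite /D /derivnorm; apply: (sup_upper_bound hsD).
    by exists 0, 1; split.
  by apply: le_trans hm; rewrite divr_ge0 // subr_ge0.
have hsS : has_sup [set `|m0 x| | x in [set x : R | 0 <= x]].
  split; first by exists (`|m0 0|); exists 0; rewrite /= ?lexx.
  by exists C => _ [x x0 <-]; apply: HC.
have mS : forall x, 0 <= x -> m0 x <= S.
  move=> x x0; apply: le_trans (sup_upper_bound hsS _); last by exists x.
  exact: ler_norm.
have S0 : 0 <= S by have := mS 0 (lexx 0); rewrite m00.
set c := alpha * D `^ (alpha - 1).
have c0 : 0 <= c by rewrite mulr_ge0 ?powR_ge0 // (le_trans ler01).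
have cfl' : 2 * c * S * ht <= hr by rewrite /c !mulrA.
have H0 : forall s, 0 <= Hfun alpha m0 s by move=> s; exact: powR_ge0.
have M0 : forall n, M n 0 = 0.
  by case => //=; rewrite /M /= mul0r m00.
have MS : forall n j, 0 <= M n j /\ M n j <= S.
  elim => [|n IH] j.
    rewrite /M /=; have jh : 0 <= j%:R * hr by rewrite mulr_ge0 // ltW.
    by split; [apply: m0ge0 | apply: mS].
  case: j => [|j]; first by rewrite /M /=; split.
  rewrite /M /=; have [h1 h2] := IH j.+1.
  have X1 : 1 <= 1 + ht * Hfun alpha m0 ((M n j.+1 - M n j) / hr).
    by rewrite lerDl mulr_ge0 // ltW.
  have [g1 g2] := div_ge1 h1 X1.
  by split => //; apply: le_trans h2.
have stepn : forall n, (forall j, (0 < j)%N -> 0 <= U n j) ->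
    forall j, (0 < j)%N -> 0 <= U n.+1 j /\ exists2 k, (0 < k)%N & U n.+1 j <= U n k.
  move=> n IH [//|[|j]] _.
    have u0 := IH 1%N isT.
    have [a0 aS] := MS n 0%N.
    have := @step R 0 (M n 1%N) (U n 1%N) (U n 1%N)
      (Hfun alpha m0 (U n 1%N)) (Hfun alpha m0 (U n 1%N)) hr ht S c hr0 ht0 (lexx 0)
      S0 u0 u0.
    move=> /(_ _ (H0 _) (H0 _) c0) [].
    - by rewrite /U /Uscheme /= -/M M0 subr0 add0r mulrC divfK // gt_eqF.
    - by move=> _; rewrite subrr lexx mulr_ge0 // subrr.
    - by move=> _; rewrite subrr lexx mulr_ge0 // subrr.
    - exact: cfl'.
    move=> g1 g2.
    have E : U n.+1 1%N = (M n 1%N / (1 + ht * Hfun alpha m0 (U n 1%N)) -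
        0 / (1 + ht * Hfun alpha m0 (U n 1%N))) / hr.
      by rewrite mul0r subr0 /U /Uscheme /= subr0.
    rewrite E; split => //; exists 1%N => //.
    by move: g2; rewrite maxxx.
  have u0 := IH j.+2 isT.
  have v0 := IH j.+1 isT.
  have [a0 aS] := MS n j.+1.
  have hb : M n j.+2 = M n j.+1 + hr * U n j.+2.
    rewrite /U /Uscheme /= -/M mulrC divfK ?gt_eqF //.
    by rewrite addrC subrK.
  have := @step R (M n j.+1) (M n j.+2) (U n j.+2) (U n j.+1)
      (Hfun alpha m0 (U n j.+1)) (Hfun alpha m0 (U n j.+2)) hr ht S c hr0 ht0 a0
      aS u0 v0 hb (H0 _) (H0 _) c0.
  move=> /(_ _ _ cfl') [].
  - move=> vu; have := Hfun_props a1 D0 v0 vu; by [].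
  - move=> uv; have := Hfun_props a1 D0 u0 uv; by [].
  move=> g1 g2.
  have E : U n.+1 j.+2 = (M n j.+2 / (1 + ht * Hfun alpha m0 (U n j.+2)) -
        M n j.+1 / (1 + ht * Hfun alpha m0 (U n j.+1))) / hr by [].
  rewrite E; split => //.
  move: g2; case: (leP (U n j.+1) (U n j.+2)) => _ g2.
    by exists j.+2.
  by exists j.+1.
have pos : forall n j, (0 < j)%N -> 0 <= U n j.
  elim => [|n IH] j j0.
    rewrite /U /Uscheme /=; apply: divr_ge0; last exact: ltW.
    rewrite subr_ge0; apply: mono.
      by rewrite mulr_ge0 // ltW.
    apply: ler_wpM2r; first exact: ltW.
    by rewrite ler_nat leq_pred.
  by have [] := stepn n IH j j0.
split; first exact: pos.
move=> n.
apply: ge_ereal_sup => _ [j j0 <-].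
have [_ [k k0 hk]] := stepn n (pos n) j j0.
apply: le_ereal_sup_tmp; exists (U n k)%:E; first by exists k.
by rewrite lee_fin.
Qed.
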